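(* Let $G$ be a graph with no isolated vertices and let $\{u_1,\dots,u_k\}$, $k\ge4$, be a clique of $G$ such that $G-\{u_1,\dots,u_k\}$ has no isolated vertices. Then $b_{tR}(G)\le \sum_{i=1}^k \deg(u_i)-\frac{k(k+1)}{2}$.
   Context: A TRDF on $G=(V,E)$ is a function $f:V\to\{0,1,2\}$ such that every $v$ with $f(v)=0$ has a neighbor $u$ with $f(u)=2$ and the subgraph induced by $\{v:f(v)>0\}$ has no isolated vertices; $\gamma_{tR}(G)$ is its minimum weight. $b_{tR}(G)$ is the minimum $|E'|$ such that $G-E'$ has no isolated vertices and $\gamma_{tR}(G-E')>\gamma_{tR}(G)$ ($\infty$ if none). A clique is a set of pairwise adjacent vertices. *)

(* Defs.v *)
From mathcomp Require Import all_boot.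
Set Implicit Arguments. Unset Strict Implicit. Unset Printing Implicit Defensive.

Section Graphs.
Variable T : finType.

Definition simple_graph (g : rel T) : Prop := symmetric g /\ irreflexive g.

Definition edgeset (g : rel T) : {set {set T}} :=
  [set e : {set T} | [exists x, exists y, g x y && (e == [set x; y])]].

Definition del_edges (g : rel T) (E : {set {set T}}) : rel T :=
  fun x y => g x y && ([set x; y] \notin E).

Definition no_isolated (g : rel T) : bool := [forall v, exists w, g v w].

Definition deg (g : rel T) (v : T) : nat := #|[set w | g v w]|.

Definition trdf (g : rel T) (f : {ffun T -> 'I_3}) : bool :=
  [forall v, (val (f v) == 0) ==> [exists u, g v u && (val (f u) == 2)]] &&
  [forall v, (0 < val (f v)) ==> [exists w, (0 < val (f w)) && g v w]].

Definition weight (f : {ffun T -> 'I_3}) : nat := \sum_v val (f v).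

(* minimum weight of a TRDF; the default 2*#|T| (weight of the constant-2
   function) is never smaller than the true minimum when a TRDF exists *)
Definition gamma_tR (g : rel T) : nat :=
  \big[minn/(2 * #|T|)]_(f : {ffun T -> 'I_3} | trdf g f) weight f.

Definition bondage_set (g : rel T) (E : {set {set T}}) : bool :=
  [&& E \subset edgeset g, no_isolated (del_edges g E) &
      gamma_tR g < gamma_tR (del_edges g E)].

(* b_tR(G) : None stands for infinity *)
Definition b_tR (g : rel T) : option nat :=
  if [exists E, bondage_set g E] then
    Some (\big[minn/#|edgeset g|]_(E : {set {set T}} | bondage_set g E) #|E|)
  else None.

Definition is_clique (g : rel T) (K : {set T}) : Prop :=
  forall x y, x \in K -> y \in K -> x != y -> g x y.

Definition no_isolated_outside (g : rel T) (K : {set T}) : Prop :=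
  forall v, v \notin K -> exists w, w \notin K /\ g v w.

End Graphs.

(* Main.v *)
Require Import Defs.
From mathcomp Require Import all_boot.
From mathcomp Require Import zify.
Set Implicit Arguments. Unset Strict Implicit. Unset Printing Implicit Defensive.

Lemma ordS_val n (i : 'I_n) : val (ordS i) = if i.+1 == n then 0 else i.+1.
Proof.
rewrite /ordS /=; case: eqP => [->|ne]; first by rewrite modnn.
by rewrite modn_small // ltn_neqAle ltn_ord andbT; apply/eqP.
Qed.

Lemma ordS_neq n (i : 'I_n) : 2 <= n -> ordS i != i.
Proof.
move=> n2; apply/eqP => /(congr1 val); rewrite ordS_val.
have := ltn_ord i; case: eqP => /=; lia.
Qed.

Lemma ordSS_neq n (i : 'I_n) : 3 <= n -> ordS (ordS i) != i.
Proof.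
move=> n3; apply/eqP => /(congr1 val); rewrite !ordS_val.
have := ltn_ord i; case E1: (i.+1 == n); move/eqP: E1 => E1 /=;
  [case E2: (1 == n) | case E2: (i.+2 == n)]; move/eqP: E2 => E2 /=; lia.
Qed.

Definition Ho n (i j : 'I_n) := (j == ordS i) || (i == ordS j).

Lemma HoC n (i j : 'I_n) : Ho i j = Ho j i.
Proof. by rewrite /Ho orbC. Qed.

Lemma card_pair (I J : finType) (P : I -> J -> bool) :
  #|[set p : I * J | P p.1 p.2]| = \sum_i #|[set j | P i j]|.
Proof.
rewrite -sum1_card.
rewrite (eq_bigl (fun p : I * J => true && P p.1 p.2)); last by move=> p; rewrite inE.
rewrite -(pair_big_dep xpredT P (fun _ _ => 1)) /=.
by apply: eq_bigr => i _; rewrite -sum1_card; apply: eq_bigl => j; rewrite inE.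
Qed.

Lemma ord_count n : 3 <= n ->
  n * n.+1 <= 2 * #|[set p : 'I_n * 'I_n | (p.1 != p.2) && (Ho p.1 p.2 || (p.1 < p.2))]|.
Proof.
move=> n3.
set C := [set p : 'I_n * 'I_n | _].
set C' := [set p : 'I_n * 'I_n | (p.1 != p.2) && (Ho p.1 p.2 || (p.2 < p.1))].
have eC : #|C'| = #|C|.
  have -> : C' = [set (p.2, p.1) | p in C].
    apply/setP => -[a b]; rewrite inE /=; apply/idP/idP.
      move=> h; apply/imsetP; exists (b, a); last by [].
      by rewrite inE /= eq_sym HoC.
    by case/imsetP => -[c d]; rewrite inE /= => h [-> ->] /=; rewrite eq_sym HoC.
  by apply: card_imset => -[a b] [c d] /= [-> ->].
set D := [set p : 'I_n * 'I_n | p.1 != p.2].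
have cD : #|D| + n = n * n.
  have -> : D = ~: [set (i, i) | i : 'I_n].
    apply/setP => -[a b]; rewrite !inE /=; apply/idP/idP.
      by move=> h; apply/imsetP => -[c _ [e1 e2]]; move: h; rewrite e1 e2 eqxx.
    by move=> h; apply/eqP => e; move/imsetP: h; apply; exists a; rewrite // e.
  have cd : #|[set (i, i) | i : 'I_n]| = n.
    by rewrite card_imset ?card_ord // => a b [].
  by rewrite -[X in _ + X]cd addnC cardsC card_prod card_ord.
have sD : D \subset C :|: C'.
  apply/subsetP => -[a b]; rewrite !inE /= => ab.
  rewrite ab /=; have [e|e|e] := ltngtP a b; rewrite ?e ?orbT //.
  by move: ab; rewrite (val_inj e) eqxx.
set Hs := [set p : 'I_n * 'I_n | Ho p.1 p.2].
have sH : Hs \subset C :&: C'.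
  apply/subsetP => -[a b]; rewrite !inE /= => h; rewrite h /=.
  suff -> : a != b by [].
  move: h; rewrite /Ho; case/orP => /eqP ->.
    by rewrite eq_sym ordS_neq //; lia.
  by rewrite ordS_neq //; lia.
set S1 := [set (i, ordS i) | i : 'I_n].
set S2 := [set (ordS i, i) | i : 'I_n].
have c1 : #|S1| = n by rewrite card_imset ?card_ord // => a b [].
have c2 : #|S2| = n by rewrite card_imset ?card_ord // => a b [].
have dS : S1 :&: S2 = set0.
  apply/setP => p; rewrite !inE; apply/negP => /andP [/imsetP [a _ ->] /imsetP [b _ [e1 e2]]].
  by move: (ordSS_neq b n3); rewrite -e1 e2 eqxx.
have sS : S1 :|: S2 \subset Hs.
  apply/subsetP => p; rewrite !inE; case/orP => /imsetP [a _ ->]; by rewrite /Ho eqxx //= orbT.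
have cH : 2 * n <= #|Hs|.
  apply: leq_trans (subset_leq_card sS).
  have := cardsUI S1 S2; rewrite dS cards0 c1 c2; lia.
have := cardsUI C C'; rewrite eC => e.
have l1 := subset_leq_card sD; have l2 := subset_leq_card sH.
lia.
Qed.

Section TLevel.
Variable T : finType.
Variable g : rel T.
Variable K : {set T}.
Variable n : nat.
Variable r : T -> 'I_n.
Variable ev : 'I_n -> T.
Hypothesis hev : forall i, ev i \in K.
Hypothesis hrev : forall i, r (ev i) = i.
Hypothesis hevr : forall x, x \in K -> ev (r x) = x.
Hypothesis gsym : symmetric g.
Hypothesis girr : irreflexive g.
Hypothesis cliq : is_clique g K.
Hypothesis n3 : 3 <= n.

Definition Hr x y := [&& x \in K, y \in K & Ho (r x) (r y)].

Lemma HrC x y : Hr x y = Hr y x.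
Proof. by rewrite /Hr andbCA HoC andbA. Qed.

Lemma r_inj x y : x \in K -> y \in K -> r x = r y -> x = y.
Proof. by move=> xK yK e; rewrite -(hevr xK) -(hevr yK) e. Qed.

Lemma Ho_neq (i j : 'I_n) : Ho i j -> i != j.
Proof.
have n2 : 2 <= n by lia.
by rewrite /Ho; case/orP => /eqP ->; rewrite ?ordS_neq // eq_sym ordS_neq.
Qed.

Lemma Hr_g x y : Hr x y -> g x y.
Proof.
case/and3P => xK yK h; apply: cliq => //; apply/eqP => e.
by move: (Ho_neq h); rewrite e eqxx.
Qed.

Definition Dp := [set p : T * T | [&& g p.1 p.2, p.1 \in K, ~~ Hr p.1 p.2 &
   (p.2 \notin K) || (r p.2 < r p.1)]].
Definition Eb := [set [set p.1; p.2] | p in Dp].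

Lemma set2_inv (a b x y : T) : [set a; b] = [set x; y] ->
  (a = x /\ b = y) \/ (a = y /\ b = x).
Proof.
move=> e.
have ha : a \in [set x; y] by rewrite -e !inE eqxx.
have hb : b \in [set x; y] by rewrite -e !inE eqxx orbT.
have hx : x \in [set a; b] by rewrite e !inE eqxx.
have hy : y \in [set a; b] by rewrite e !inE eqxx orbT.
move: ha hb hx hy; rewrite !inE.
case/orP=> /eqP ea; case/orP=> /eqP eb => hx hy.
- by move: hy; rewrite ea eb orbb => /eqP ->; left.
- by left.
- by right.
- by move: hx; rewrite ea eb orbb => /eqP ->; right.
Qed.

Lemma Eb_mem x y : g x y ->
  ([set x; y] \in Eb) = ~~ ((x \notin K) && (y \notin K) || Hr x y).
Proof.
move=> gxy; apply/idP/idP.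
  case/imsetP => -[a b]; rewrite inE /= => /and4P [gab aK nH hb] e.
  case: (set2_inv (esym e)) => -[ea eb]; subst.
    by rewrite negb_or aK /= nH.
  by rewrite negb_or aK /= andbF /= HrC.
rewrite negb_or => /andP [hK nH].
have xy : x != y by apply/eqP => e; move: gxy; rewrite e girr.
case xK : (x \in K); case yK : (y \in K); move: hK; rewrite ?xK ?yK //= => _.
- have rxy : r x != r y by apply/eqP => /(r_inj xK yK) /eqP; rewrite (negbTE xy).
  case: (ltngtP (r x) (r y)) => h.
  + apply/imsetP; exists (y, x); last by rewrite /= setUC.
    by rewrite inE /= gsym gxy yK HrC nH h orbT.
  + apply/imsetP; exists (x, y); last by [].
    by rewrite inE /= gxy xK nH h orbT.
  + by move: rxy; rewrite (val_inj h) eqxx.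
- apply/imsetP; exists (x, y); last by [].
  by rewrite inE /= gxy xK nH yK.
- apply/imsetP; exists (y, x); last by rewrite /= setUC.
  by rewrite inE /= gsym gxy yK HrC nH xK.
Qed.

Lemma del_char x y : del_edges g Eb x y = g x y && ((x \notin K) && (y \notin K) || Hr x y).
Proof.
rewrite /del_edges; case gxy : (g x y) => //=.
by rewrite Eb_mem // negbK.
Qed.


Lemma ev_inj : injective ev.
Proof. by move=> i j e; rewrite -(hrev i) -(hrev j) e. Qed.

Lemma count_T : 2 * #|Dp| + n * n.+1 <= 2 * \sum_(u in K) deg g u.
Proof.
set P := [set p : T * T | (p.1 \in K) && g p.1 p.2].
have eS : \sum_(u in K) deg g u = #|P|.
  rewrite /P (card_pair (fun u w => (u \in K) && g u w)) big_mkcond /=; apply: eq_bigr => u _.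
  case: ifP => uK; first by apply: eq_card => w; rewrite !inE.
  by apply/esym/eqP; rewrite cards_eq0; apply/eqP/setP => w; rewrite !inE.
have sDP : Dp \subset P.
  by apply/subsetP => -[x y]; rewrite !inE /= => /and4P [-> -> _ _].
have eP : #|P| = #|Dp| + #|P :\: Dp|.
  by rewrite -(cardsID Dp P) (setIidPr sDP).
set Cset := [set p : T * T | [&& p.1 \in K, p.2 \in K, p.1 != p.2 &
   Ho (r p.1) (r p.2) || (r p.1 < r p.2)]].
have eC : P :\: Dp = Cset.
  apply/setP => -[x y]; rewrite !inE /=.
  case xK : (x \in K); case yK : (y \in K) => //=; rewrite /Hr ?xK ?yK /=.
  - case: (eqVneq x y) => [<-|xy]; first by rewrite girr /= ?andbF.
    rewrite (cliq xK yK xy) /= andbT negb_and negbK.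
    have rxy : r x != r y by apply/eqP => /(r_inj xK yK) /eqP; rewrite (negbTE xy).
    case: (ltngtP (r x) (r y)) => h; rewrite ?orbT ?orbF //.
    by move: rxy; rewrite (val_inj h) eqxx.
  - by rewrite andbT andNb.
  - by rewrite andbF.
  - by rewrite andbF.
have eCo : #|Cset| = #|[set p : 'I_n * 'I_n | (p.1 != p.2) && (Ho p.1 p.2 || (p.1 < p.2))]|.
  have inj : injective (fun p : 'I_n * 'I_n => (ev p.1, ev p.2)).
    by move=> [a b] [c d] /= [/ev_inj -> /ev_inj ->].
  rewrite -(card_imset _ inj); apply: eq_card => -[x y]; rewrite inE /=.
  apply/idP/idP.
    case/and4P => xK yK xy h; apply/imsetP; exists (r x, r y); last by rewrite /= !hevr.
    rewrite inE /= h andbT; apply/eqP => /(r_inj xK yK) /eqP; by rewrite (negbTE xy).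
  case/imsetP => -[i j]; rewrite inE /= => /andP [ij h] [-> ->].
  rewrite !hev !hrev h /= andbT; apply/eqP => /ev_inj /eqP; by rewrite (negbTE ij).
rewrite eC eCo in eP; rewrite eS eP; have := ord_count n3; lia.
Qed.


Lemma sum2 (F : T -> nat) a b : a \in K -> b \in K -> a != b ->
  F a + F b <= \sum_(x in K) F x.
Proof.
move=> aK bK ab; rewrite (bigD1 a) //= (bigD1 b) /=; last by rewrite bK eq_sym.
by rewrite addnA leq_addr.
Qed.

Lemma sum3 (F : T -> nat) a b c : a \in K -> b \in K -> c \in K -> a != b ->
  a != c -> b != c -> F a + F b + F c <= \sum_(x in K) F x.
Proof.
move=> aK bK cK ab ac bc; rewrite (bigD1 a) //= (bigD1 b) /=; last by rewrite bK eq_sym.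
rewrite (bigD1 c) /=; last by rewrite cK eq_sym ac eq_sym bc.
by rewrite !addnA leq_addr.
Qed.

Lemma Kweight (g' : rel T) (f : {ffun T -> 'I_3}) :
  (forall x y, x \in K -> g' x y -> (y \in K) && Ho (r x) (r y)) ->
  4 <= n -> #|K| = n -> trdf g' f -> 4 <= \sum_(x in K) val (f x).
Proof.
move=> hg n4 hn /andP [/forallP h1 /forallP h2].
case: (boolP [exists a in K, val (f a) == 2]).
  case/existsP => a /andP [aK /eqP fa].
  have [w /andP [fw gaw]] : exists w, (0 < val (f w)) && g' a w.
    by apply/existsP; apply: (implyP (h2 a)); rewrite fa.
  case/andP: (hg _ _ aK gaw) => wK Haw.
  set S := r a |: (ordS (r a) |: [set ord_pred (r a)]).
  have cS : #|S| <= 3.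
    rewrite /S !cardsU1 cards1.
    exact: (leq_add (leq_b1 _) (leq_add (leq_b1 _) (leqnn 1))).
  have [j hj] : exists j : 'I_n, j \notin S.
    have : 0 < #|~: S|.
      rewrite -(ltn_add2l #|S|) addn0 cardsC card_ord.
      by apply: (leq_ltn_trans cS); apply: leq_trans n4.
    by case/card_gt0P => j; rewrite inE => hj; exists j.
  have bK : ev j \in K := hev j.
  move: hj; rewrite !inE !negb_or => /and3P [j1 j2 j3].
  have nHab : ~~ Ho (r a) (r (ev j)).
    rewrite hrev /Ho negb_or j2 /=; apply/eqP => e.
    by move: j3; rewrite e ordSK eqxx.
  have ba : ev j != a by apply/eqP => e; move: j1; rewrite -e hrev eqxx.
  have wb : w != ev j by apply/eqP => e; move: nHab; rewrite -e Haw.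
  have wa : w != a.
    by apply/eqP => e; move: (Ho_neq Haw); rewrite e eqxx.
  case: (posnP (val (f (ev j)))) => fb.
    have [c /andP [gbc /eqP fc]] : exists c, g' (ev j) c && (val (f c) == 2).
      by apply/existsP; apply: (implyP (h1 (ev j))); rewrite fb.
    case/andP: (hg _ _ bK gbc) => cK Hbc.
    have ac : a != c.
      by apply/eqP => e; move: nHab; rewrite HoC e Hbc.
    have := sum2 (fun x => val (f x)) aK cK ac; rewrite /= fa fc; exact.
  have aw : a != w by rewrite eq_sym.
  have ab' : a != ev j by rewrite eq_sym.
  have := sum3 (fun x => val (f x)) aK wK bK aw ab' wb; rewrite /= fa => h.
  exact: leq_trans (leq_add (leq_add (leqnn 2) fw) fb) h.
move=> hna.
have h1K : forall x, x \in K -> 1 <= val (f x).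
  move=> x xK; rewrite lt0n; apply/negP => f0.
  have [u /andP [gxu /eqP fu]] : exists u, g' x u && (val (f u) == 2).
    by apply/existsP; apply: (implyP (h1 x)).
  case/andP: (hg _ _ xK gxu) => uK _.
  by move: hna; apply/negP; rewrite negbK; apply/existsP; exists u; rewrite uK fu.
apply: (@leq_trans (\sum_(x in K) 1)); last by apply: leq_sum.
by rewrite sum1_card hn.
Qed.


Definition o0 : 'I_3 := @Ordinal 3 0 isT.
Definition o1 : 'I_3 := @Ordinal 3 1 isT.
Definition o2 : 'I_3 := @Ordinal 3 2 isT.

Lemma gamma_step (g' : rel T) (f : {ffun T -> 'I_3}) u1 u2 :
  u1 \in K -> u2 \in K -> u1 != u2 ->
  (forall x y, x \notin K -> g' x y -> (y \notin K) && g x y) ->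
  (forall x y, x \in K -> g' x y -> (y \in K) && Ho (r x) (r y)) ->
  4 <= n -> #|K| = n -> trdf g' f ->
  exists f', trdf g f' /\ weight f' < weight f.
Proof.
move=> u1K u2K u12 hout hin n4 hn tf.
have hw := Kweight hin n4 hn tf.
move: tf => /andP [/forallP h1 /forallP h2].
have u21 : u2 != u1 by rewrite eq_sym.
pose f' := [ffun x => if x \in K then (if x == u1 then o2 else if x == u2 then o1 else o0) else f x].
exists f'; split.
  apply/andP; split; apply/forallP => v; apply/implyP; rewrite ffunE.
  - case: ifP => vK.
      case: (eqVneq v u1) => [_ //|vu1]; case: (eqVneq v u2) => [_ //| vu2] _.
      apply/existsP; exists u1; rewrite ffunE u1K eqxx /= andbT.
      exact: cliq.
    move=> f0; have [u /andP [gvu fu]] : exists u, g' v u && (val (f u) == 2).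
      by apply/existsP; apply: (implyP (h1 v)).
    case/andP: (hout v u (negbT vK) gvu) => uK gvu'.
    by apply/existsP; exists u; rewrite gvu' ffunE (negbTE uK) fu.
  - case: ifP => vK.
      case: (eqVneq v u1) => [-> _|vu1].
        by apply/existsP; exists u2; rewrite ffunE u2K (negbTE u21) eqxx /= cliq.
      case: (eqVneq v u2) => [-> _|vu2] //.
      by apply/existsP; exists u1; rewrite ffunE u1K eqxx /= cliq.
    move=> fp; have [w /andP [fw gvw]] : exists w, (0 < val (f w)) && g' v w.
      by apply/existsP; apply: (implyP (h2 v)).
    case/andP: (hout v w (negbT vK) gvw) => wK gvw'.
    by apply/existsP; exists w; rewrite gvw' ffunE (negbTE wK) fw.
rewrite /weight (bigID (fun x => x \in K)) [X in _ < X](bigID (fun x => x \in K)) /=.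
have e1 : \sum_(i | i \notin K) val (f' i) = \sum_(i | i \notin K) val (f i).
  by apply: eq_bigr => i iK; rewrite ffunE (negbTE iK).
have e2 : \sum_(i in K) val (f' i) = 3.
  rewrite (bigD1 u1) //= (bigD1 u2) /=; last by rewrite u2K u21.
  rewrite big1 => [|i /andP [/andP [iK i1] i2]].
    by rewrite !ffunE u1K u2K eqxx (negbTE u21) eqxx.
  by rewrite ffunE iK (negbTE i1) (negbTE i2).
rewrite e1 e2 ltn_add2r; exact: hw.
Qed.

End TLevel.

Lemma bigmin_le_seq (I : eqType) (s : seq I) (P : pred I) (F : I -> nat) d j :
  j \in s -> P j -> \big[minn/d]_(i <- s | P i) F i <= F j.
Proof.
elim: s => // a s IH; rewrite inE big_cons => /orP [/eqP <- Pj|js Pj].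
  by rewrite Pj geq_minl.
case: ifP => _; last exact: IH.
exact: leq_trans (geq_minr _ _) (IH js Pj).
Qed.

Lemma bigmin_le (I : finType) (P : pred I) (F : I -> nat) d j :
  P j -> \big[minn/d]_(i | P i) F i <= F j.
Proof. by move=> Pj; apply: bigmin_le_seq; rewrite ?mem_index_enum. Qed.

Theorem mainTheorem15 (T : finType) (g : rel T) (K : {set T}) :
  simple_graph g -> no_isolated g ->
  is_clique g K -> 4 <= #|K| -> no_isolated_outside g K ->
  exists m, b_tR g = Some m /\
    2 * m + #|K| * (#|K| + 1) <= 2 * (\sum_(u in K) deg g u).
Proof.
move=> [gsym girr] noi cliq k4 nio.
have /card_gt0P [x0 Kx0] : 0 < #|K| by apply: leq_trans k4.
pose r := enum_rank_in Kx0.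
pose ev := @enum_val T (mem K).
have hev : forall i, ev i \in K := fun i => enum_valP i.
have hrev : forall i, r (ev i) = i := enum_valK_in Kx0.
have hevr : forall x, x \in K -> ev (r x) = x := fun x xK => enum_rankK_in Kx0 xK.
have n3 : 2 < #|K| by apply: leq_trans k4.
have n2 : 1 < #|K| by apply: leq_trans k4.
set E := Eb g K r.
have dc := del_char hevr gsym girr.
have hout : forall x y, x \notin K -> del_edges g E x y -> (y \notin K) && g x y.
  move=> x y xK; rewrite dc => /andP [gxy /orP [/andP [_ ->] | /and3P [xK' _ _]]].
    by rewrite gxy.
  by rewrite xK' in xK.
have hin : forall x y, x \in K -> del_edges g E x y -> (y \in K) && Ho (r x) (r y).
  by move=> x y xK; rewrite dc xK /= /Hr xK => /andP [_ /and3P [_ -> ->]].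
have nxt : forall v, v \in K -> (v != ev (ordS (r v))) && Ho (r v) (r (ev (ordS (r v)))).
  move=> v vK; rewrite hrev /Ho eqxx /= andbT.
  apply/eqP => /(congr1 r); rewrite hrev => e.
  by move: (ordS_neq (r v) n2); rewrite -e eqxx.
have noi' : no_isolated (del_edges g E).
  apply/forallP => v; apply/existsP.
  case: (boolP (v \in K)) => vK.
    case/andP: (nxt v vK) => ne h.
    exists (ev (ordS (r v))); rewrite dc (cliq _ _ vK (hev _) ne) /= /Hr vK hev /=.
    exact: h.
  have [w [wK gvw]] := nio v vK.
  by exists w; rewrite dc gvw /= vK wK.
have u12 : x0 != ev (ordS (r x0)) by case/andP: (nxt x0 Kx0).
have step : forall f, trdf (del_edges g E) f -> gamma_tR g < weight f.
  move=> f tf.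
  have [f' [tf' wf']] := gamma_step hev hrev cliq n3 Kx0 (hev _) u12 hout hin k4 erefl tf.
  have hb := @bigmin_le _ (fun f => trdf g f) (fun f => weight f) (2 * #|T|) f' tf'.
  exact: leq_ltn_trans hb wf'.
have lt : gamma_tR g < gamma_tR (del_edges g E).
  rewrite [X in _ < X]/gamma_tR; apply: (big_ind (fun m => gamma_tR g < m)).
  - pose c2 := [ffun _ : T => o2].
    have w2 : weight c2 = 2 * #|T|.
      rewrite /weight (eq_bigr (fun _ => 2)); last by move=> v _; rewrite ffunE.
      by rewrite sum_nat_const mulnC.
    rewrite -w2; apply: step.
    apply/andP; split; apply/forallP => v; rewrite ffunE; first by [].
    apply/implyP => _; have /existsP [w gvw] := forallP noi' v.
    by apply/existsP; exists w; rewrite ffunE.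
  - by move=> a b ha hb; rewrite leq_min ha hb.
  - by move=> f tf; apply: step.
have bs : bondage_set g E.
  apply/and3P; split => //.
  apply/subsetP => e /imsetP [[a b]]; rewrite inE /= => /and4P [gab _ _ _] ->.
  by rewrite inE; apply/existsP; exists a; apply/existsP; exists b; rewrite gab eqxx.
rewrite /b_tR; have -> : [exists E0, bondage_set g E0] by apply/existsP; exists E.
eexists; split; first reflexivity.
have h1 := @bigmin_le _ (fun E0 => bondage_set g E0) (fun E0 : {set {set T}} => #|E0|) #|edgeset g| E bs.
have h2 : #|E| <= #|Dp g K r| := leq_imset_card _ _.
have h3 := count_T hev hrev hevr girr cliq n3.
rewrite addn1; apply: leq_trans h3.
rewrite leq_add2r leq_mul2l /=.
exact: leq_trans h1 h2.
Qed.
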